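(* Suppose $l$ is $(M,m)$-(restricted smooth, restricted strongly concave) on $\Omega_{2k}$. Then for all subsets $\mathsf{S},\mathsf{T}\subseteq[n]$ of size at most $k$, $$2M\sum_{j\in\mathsf{T}}f_{\mathsf{S}}(j)\ \ge\ \|\nabla l(\boldsymbol\beta^{(\mathsf{S})})_{\mathsf{T}}\|_2^2\ \ge\ 2m\sum_{j\in\mathsf{T}}f_{\mathsf{S}}(j).$$
   Context: $\Omega_r=\{(\mathbf{x},\mathbf{y})\in\mathbb{R}^n\times\mathbb{R}^n:\|\mathbf{x}\|_0\le r,\|\mathbf{y}\|_0\le r,\|\mathbf{x}-\mathbf{y}\|_0\le r\}$. A differentiable $l:\mathbb{R}^n\to\mathbb{R}$ is $(M,m)$-(restricted smooth, restricted strongly concave) on $\Omega_r$ if for all $(\mathbf{x},\mathbf{y})\in\Omega_r$: $-\tfrac{m}{2}\|\mathbf{y}-\mathbf{x}\|_2^2\ge l(\mathbf{y})-l(\mathbf{x})-\langle\nabla l(\mathbf{x}),\mathbf{y}-\mathbf{x}\rangle\ge -\tfrac{M}{2}\|\mathbf{y}-\mathbf{x}\|_2^2$, with $m,M>0$. For $\mathsf{S}\subseteq[n]$, $\boldsymbol\beta^{(\mathsf{S})}$ is a maximizer of $l$ over vectors supported in $\mathsf{S}$, $f(\mathsf{S})=l(\boldsymbol\beta^{(\mathsf{S})})-l(\mathbf{0})$, and $f_{\mathsf{S}}(j)=f(\mathsf{S}\cup\{j\})-f(\mathsf{S})$. $\mathbf{e}_j$ is the $j$-th unit vector and $\|\nabla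 l(\boldsymbol\beta)_{\mathsf{T}}\|_2^2=\sum_{j\in\mathsf{T}}\langle\nabla l(\boldsymbol\beta),\mathbf{e}_j\rangle^2$. *)

(* Defs.v *)
From HB Require Import structures.
From mathcomp Require Import all_boot all_order all_algebra.
From mathcomp Require Import all_classical all_reals all_analysis.
Set Implicit Arguments. Unset Strict Implicit. Unset Printing Implicit Defensive.
Import Order.TTheory GRing.Theory Num.Theory.
Import numFieldNormedType.Exports.
Local Open Scope classical_set_scope.
Local Open Scope ring_scope.

Section Defs.
Variables (R : realType) (n : nat).
Implicit Types (x y : 'rV[R]_n) (S : {set 'I_n}) (l : 'rV[R]_n -> R^o).

Definition l0norm x : nat := #|[set i | x 0 i != 0]|.

Definition Omega (r : nat) (x y : 'rV[R]_n) : Prop :=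
  [/\ (l0norm x <= r)%N, (l0norm y <= r)%N & (l0norm (x - y) <= r)%N].

Definition sqnorm2 x : R := \sum_i (x 0 i) ^+ 2.
Definition inner x y : R := \sum_i x 0 i * y 0 i.

Definition evec (j : 'I_n) : 'rV[R]_n := delta_mx 0 j.

Definition grad l x : 'rV[R]_n := \row_j ('d l x (evec j) : R).

Definition RSSC (M m : R) (r : nat) l : Prop :=
  0 < m /\ 0 < M /\
  forall x y, Omega r x y ->
    - (m / 2) * sqnorm2 (y - x) >= l y - l x - inner (grad l x) (y - x) /\
    l y - l x - inner (grad l x) (y - x) >= - (M / 2) * sqnorm2 (y - x).

Definition supported S x : Prop := forall i, i \notin S -> x 0 i = 0.

Definition is_maximizer l S b : Prop :=
  supported S b /\ forall x, supported S x -> l x <= l b.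

(* f(S) = l(beta^(S)) - l(0), written as the (attained) supremum *)
Definition fS l S : R :=
  sup [set v : R | exists x, supported S x /\ v = l x - l 0].

Definition fmarg l S (j : 'I_n) : R := fS l (j |: S) - fS l S.

Definition gradTsq l b (T : {set 'I_n}) : R :=
  \sum_(j in T) (inner (grad l b) (evec j)) ^+ 2.

End Defs.

(* Main.v *)
Require Import Defs.
From HB Require Import structures.
From mathcomp Require Import all_boot all_order all_algebra.
From mathcomp Require Import all_classical all_reals all_analysis.
From mathcomp Require Import ring lra zify.
Import Order.TTheory GRing.Theory Num.Theory.
Import numFieldNormedType.Exports.
Local Open Scope ring_scope.

Lemma evecE (R : realType) (n : nat) (j i : 'I_n) : (evec R j) 0 i = (j == i)%:R.
Proof. by rewrite /evec mxE /= eq_sym. Qed.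

Lemma inner_sc (R : realType) (n : nat) (x : 'rV[R]_n) (t : R) (j : 'I_n) :
  inner x (t *: evec R j) = t * x 0 j.
Proof.
rewrite /inner (bigD1 j) //= big1 => [|i ij]; rewrite !mxE /=.
  by rewrite eqxx mulr1 addr0 mulrC.
by rewrite (negbTE ij) mulr0 mulr0.
Qed.

Lemma sqnorm_sc (R : realType) (n : nat) (t : R) (j : 'I_n) :
  sqnorm2 (t *: evec R j) = t ^+ 2.
Proof.
rewrite /sqnorm2 (bigD1 j) //= big1 => [|i ij]; rewrite !mxE /=.
  by rewrite eqxx mulr1 addr0.
by rewrite (negbTE ij) mulr0 expr0n.
Qed.

Lemma supp_l0 (R : realType) (n : nat) (U : {set 'I_n}) (x : 'rV[R]_n) :
  supported U x -> (l0norm x <= #|U|)%N.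
Proof.
move=> H; rewrite /l0norm (@eq_card _ _ [set i | x 0 i != 0]).
  apply/subset_leq_card/fintype.subsetP => i; rewrite inE.
  by apply: contraR => /H ->; rewrite eqxx.
move=> i; rewrite inE.
by apply/idP/idP => [/set_mem //|h]; apply: mem_set.
Qed.

Lemma supp_Omega (R : realType) (n r : nat) (U : {set 'I_n}) (x y : 'rV[R]_n) :
  (#|U| <= r)%N -> supported U x -> supported U y -> Omega r x y.
Proof.
move=> hU hx hy; split.
- exact: leq_trans (@supp_l0 _ _ U _ hx) hU.
- exact: leq_trans (@supp_l0 _ _ U _ hy) hU.
apply: leq_trans (@supp_l0 _ _ U _ _) hU => i iU.
by rewrite !mxE hx // hy // subr0.
Qed.

Lemma supp_add (R : realType) (n : nat) (S : {set 'I_n}) (b : 'rV[R]_n) t j :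
  supported S b -> supported (j |: S) (b + t *: evec R j).
Proof.
move=> hb i; rewrite !inE negb_or => /andP[ij iS].
by rewrite !mxE /= hb // (negbTE ij) mulr0 addr0.
Qed.

Lemma supp_sub (R : realType) (n : nat) (S S' : {set 'I_n}) (b : 'rV[R]_n) :
  S \subset S' -> supported S b -> supported S' b.
Proof. by move=> /fintype.subsetP sS hb i iS; apply: hb; apply: contra iS; apply: sS. Qed.

Arguments supp_Omega {R n r U x y}.
Arguments supp_add {R n S b} t j.
Arguments supp_sub {R n S S' b}.
Arguments supp_l0 {R n U x}.

Theorem mainTheorem3 (R : realType) (n k : nat) (l : 'rV[R]_n -> R^o) (M m : R) :
  (forall x, differentiable l x) ->
  RSSC M m (2 * k) l ->
  forall (S T : {set 'I_n}), (#|S| <= k)%N -> (#|T| <= k)%N ->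
  forall b : 'rV[R]_n, is_maximizer l S b ->
    2 * M * (\sum_(j in T) fmarg l S j) >= gradTsq l b T /\
    gradTsq l b T >= 2 * m * (\sum_(j in T) fmarg l S j).
Proof.
move=> _ [m0 [M0 HR]] S T hS hT b [hb bmax].
set g := grad l b.
have hjS j : (0 < k)%N -> (#|j |: S| <= 2 * k)%N.
  move=> k0; rewrite cardsU1; have := leq_b1 (j \notin S); lia.
have fSS : fS l S = l b - l 0.
  apply/eqP; rewrite eq_le; apply/andP; split.
    apply: ge_sup; first by exists (l b - l 0), b.
    by move=> v [x [hx ->]]; rewrite lerD2r; apply: bmax.
  apply: ub_le_sup; last by exists b.
  by exists (l b - l 0) => v [x [hx ->]]; rewrite lerD2r; apply: bmax.
have low j t : (0 < k)%N -> M * t ^+ 2 / 2 + t * (g 0 j - M * t) <= l (b + t *: evec R j) - l b.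
  move=> k0.
  have := (HR b (b + t *: evec R j) (supp_Omega (hjS j k0)
              (supp_sub (finset.subsetUr _ _) hb) (supp_add t j hb))).2.
  rewrite addrAC subrr add0r inner_sc sqnorm_sc.
  move=> h; rewrite -[g]/(grad l b); lra.
have g0 i : (0 < k)%N -> i \in S -> g 0 i = 0.
  move=> k0 iS; have := low i (g 0 i / M) k0.
  set t := g 0 i / M.
  have gt : g 0 i = M * t by rewrite /t mulrC divfK ?gt_eqF.
  rewrite gt subrr mulr0 addr0.
  have : l (b + t *: evec R i) <= l b.
    apply: bmax; apply: supp_sub (supp_add _ _ hb); rewrite finset.subUset fintype.subxx andbT.
    by rewrite finset.sub1set.
  move=> h1 h2.
  have : M * t ^+ 2 <= 0 by lra.
  rewrite pmulr_rle0 // => ht.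
  have : t ^+ 2 = 0 by apply/eqP; rewrite eq_le ht sqr_ge0.
  by move/eqP; rewrite sqrf_eq0 => /eqP t0; rewrite t0 mulr0.
have key j : j \in T -> (inner g (evec R j)) ^+ 2 <= 2 * M * fmarg l S j /\
                       2 * m * fmarg l S j <= (inner g (evec R j)) ^+ 2.
  move=> jT.
  have k0 : (0 < k)%N by apply: leq_trans hT; apply/card_gt0P; exists j.
  rewrite -[evec R j]scale1r inner_sc mul1r.
  have [jS|jS] := boolP (j \in S).
    rewrite /fmarg (finset.setUidPr _); last by rewrite finset.sub1set.
    rewrite subrr mulr0 g0 // expr0n /=; split; lra.
  set gj := g 0 j.
  have ub x : supported (j |: S) x -> 2 * m * (l x - l b) <= gj ^+ 2.
    move=> hx.
    have hsb : supported (j |: S) b by apply: supp_sub hb; apply: finset.subsetUr.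
    have := (HR b x (supp_Omega (hjS j k0) hsb hx)).1.
    have -> : inner g (x - b) = gj * x 0 j.
      rewrite /inner (bigD1 j) //= big1 => [|i ij].
        rewrite /gj /g !mxE (hb j jS) subr0 addr0. reflexivity.
      have [iS|iS] := boolP (i \in S); first by rewrite g0 // mul0r.
      rewrite !mxE hx ?hb ?subr0 ?mulr0 //.
      by rewrite in_setU1 negb_or ij.
    have : x 0 j ^+ 2 <= sqnorm2 (x - b).
      rewrite /sqnorm2 (bigD1 j) //= !mxE (hb j jS) subr0 lerDl.
      by apply: sumr_ge0 => i _; apply: sqr_ge0.
    move=> hsq h.
    have : 0 <= (m * x 0 j - gj) ^+ 2 by apply: sqr_ge0.
    nra.
  have hub : has_ubound [set v : R | exists x, supported (j |: S) x /\ v = l x - l 0]%classic.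
    exists (l b - l 0 + gj ^+ 2 / (2 * m)) => v [x [hx ->]].
    have := ub x hx.
    rewrite -ler_pdivlMl; last by rewrite mulr_gt0.
    move=> h; rewrite mulrC; lra.
  have up : fS l (j |: S) <= l b - l 0 + gj ^+ 2 / (2 * m).
    apply: ge_sup; first by exists (l 0 - l 0), 0; split => // i _; rewrite mxE.
    move=> v [x [hx ->]].
    have := ub x hx.
    rewrite -ler_pdivlMl; last by rewrite mulr_gt0.
    move=> h; rewrite mulrC; lra.
  set t := gj / M.
  have gt : gj = M * t by rewrite /t mulrC divfK ?gt_eqF.
  have lo : l b - l 0 + M * t ^+ 2 / 2 <= fS l (j |: S).
    have := low j t k0; rewrite -/gj gt subrr mulr0 addr0 => h.
    apply: le_trans (ub_le_sup hub _); last first.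
      by exists (b + t *: evec R j); split => //; apply: supp_add.
    lra.
  rewrite /fmarg fSS; split.
    rewrite gt; nra.
  have : 2 * m * (fS l (j |: S) - (l b - l 0)) <= 2 * m * (gj ^+ 2 / (2 * m)).
    by rewrite ler_pM2l ?mulr_gt0 //; lra.
  have e : 2 * m * (gj ^+ 2 / (2 * m)) = gj ^+ 2.
    by rewrite mulrC divfK // mulf_neq0 // gt_eqF.
  by rewrite e.
split; rewrite /gradTsq mulr_sumr; apply: ler_sum => j jT; by case: (key j jT).
Qed.
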